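(* Let $\ell, n_1,\dots,n_\ell$ be positive integers, let $K_1,\dots,K_\ell$ be finite fields with a common finite extension field $\mathbb{F}$, and let $n=n_1+\cdots+n_\ell$. Let $\mathcal{C}\subseteq\mathbb{F}^n$ be an $\mathbb{F}$-linear code of dimension $k\geq 1$ with generator matrix $\mathbf{G}$ (a $k\times n$ matrix over $\mathbb{F}$). Then $\mathcal{C}$ is MSRD if and only if $\mathbf{G}\mathbf{A}$ is invertible for every $n\times k$ matrix $\mathbf{A}$ of rank $k$ of the block-diagonal form $\mathbf{A}=\mathrm{diag}(\mathbf{A}_1,\dots,\mathbf{A}_\ell)$, where each $\mathbf{A}_i$ is an $n_i\times k_i$ matrix with entries in $K_i$, $k_i\leq n_i$, and $\sum_{i=1}^{\ell}k_i=k$.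
   Context: Write vectors $\mathbf{c}\in\mathbb{F}^n$ as $\mathbf{c}=(\mathbf{c}^{(1)},\dots,\mathbf{c}^{(\ell)})$ with $\mathbf{c}^{(i)}\in\mathbb{F}^{n_i}$. Fix for each $i$ an ordered basis of $\mathbb{F}$ over $K_i$ (with $m_i=[\mathbb{F}:K_i]$), and let $\Gamma_i(\mathbf{c}^{(i)})$ be the $m_i\times n_i$ matrix over $K_i$ whose $j$-th column is the coordinate vector of the $j$-th entry of $\mathbf{c}^{(i)}$ with respect to this basis. The sum-rank weight of $\mathbf{c}$ is $\mathrm{srank}(\mathbf{c})=\sum_{i=1}^\ell \mathrm{rank}_{K_i}(\Gamma_i(\mathbf{c}^{(i)}))$ (independent of the chosen bases). The minimum sum-rank distance of $\mathcal{C}$ is $d=\min\{\mathrm{srank}(\mathbf{c}):\mathbf{c}\in\mathcal{C},\ \mathbf{c}\neq 0\}$, and $\mathcal{C}$ is called MSRD (maximum sum-rank distance) if $d=n-k+1$. *)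

(* Defs.v *)
From HB Require Import structures.
From mathcomp Require Import all_boot all_order all_algebra.
Set Implicit Arguments. Unset Strict Implicit. Unset Printing Implicit Defensive.
Import Order.TTheory GRing.Theory Num.Theory.
Local Open Scope ring_scope.

Section SumRank.
Variable F : finFieldType.

(* An ordered basis b_1..b_m of F over a field K, where K is embedded in F
   via the (necessarily injective) ring morphism sigma : every x in F has a
   unique coordinate vector a in K^m with x = sum_r sigma(a_r) b_r. *)
Definition is_basis (K : finFieldType) (sigma : {rmorphism K -> F}) (m : nat)
  (b : 'I_m -> F) : Prop :=
  forall x : F, exists! a : 'rV[K]_m, x = \sum_(r < m) sigma (a 0 r) * b r.

Definition coordv (K : finFieldType) (sigma : {rmorphism K -> F}) (m : nat)
  (b : 'I_m -> F) (x : F) : 'rV[K]_m :=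
  odflt 0 [pick a : 'rV[K]_m | x == \sum_(r < m) sigma (a 0 r) * b r].

Definition Gamma (K : finFieldType) (sigma : {rmorphism K -> F}) (m : nat)
  (b : 'I_m -> F) (n : nat) (c : 'rV[F]_n) : 'M[K]_(m, n) :=
  \matrix_(r < m, j < n) coordv sigma b (c 0 j) 0 r.

Definition srank (l : nat) (n : 'I_l -> nat) (K : 'I_l -> finFieldType)
  (sigma : forall i, {rmorphism K i -> F}) (m : 'I_l -> nat)
  (b : forall i, 'I_(m i) -> F) (c : 'rV[F]_(\sum_(i < l) n i)) : nat :=
  (\sum_(i < l) \rank (Gamma (sigma i) (b i) (submxrow c i)))%N.

Definition min_srank_dist (l : nat) (n : 'I_l -> nat) (K : 'I_l -> finFieldType)
  (sigma : forall i, {rmorphism K i -> F}) (m : 'I_l -> nat)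
  (b : forall i, 'I_(m i) -> F) (k : nat) (G : 'M[F]_(k, \sum_(i < l) n i)) : nat :=
  \big[minn/(\sum_(i < l) n i).+1]_(c : 'rV[F]_(\sum_(i < l) n i) |
      (c <= G)%MS && (c != 0)) srank sigma b c.

Definition MSRD (l : nat) (n : 'I_l -> nat) (K : 'I_l -> finFieldType)
  (sigma : forall i, {rmorphism K i -> F}) (m : 'I_l -> nat)
  (b : forall i, 'I_(m i) -> F) (k : nat) (G : 'M[F]_(k, \sum_(i < l) n i)) : Prop :=
  min_srank_dist sigma b G = ((\sum_(i < l) n i) - k + 1)%N.

End SumRank.

Definition blkdiag (T : nmodType) (l : nat) (p q : 'I_l -> nat)
  (B : forall i, 'M[T]_(p i, q i)) : 'M[T]_(\sum_(i < l) p i, \sum_(i < l) q i) :=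
  \mxblock_(i < l, j < l)
     (\matrix_(a < p i, b < q j)
        if (i == j) then
          (if insub (val b) is Some b' then B i a b' else 0)
        else 0).

(* Main.v *)
Require Import Defs.
From HB Require Import structures.
From mathcomp Require Import all_boot all_order all_algebra.
From mathcomp Require Import zify.
Import GRing.Theory.
Local Open Scope ring_scope.
Set Implicit Arguments. Unset Strict Implicit.


Section Gen.
Variable F : fieldType.

Lemma ker_nonzero m n (X : 'M[F]_(m,n)) :
  (\rank X < m)%N -> exists2 u : 'rV_m, u != 0 & u *m X = 0.
Proof.
move=> hr.
have nz : kermx X != 0.
  by rewrite -mxrank_eq0 mxrank_ker subn_eq0 -ltnNge.
case: (pickP (fun i => row i (kermx X) != 0)) => [i hi|hn].
  by exists (row i (kermx X)) => //; rewrite -row_mul mulmx_ker row0.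
case/eqP: nz; apply/row_matrixP => i; rewrite row0.
by move: (hn i) => /negbFE/eqP.
Qed.

Lemma colinjP r s (M : 'M[F]_(r,s)) :
  \rank M = s <-> (forall v : 'cV_s, M *m v = 0 -> v = 0).
Proof.
split.
- move=> hr v hv; have hf : row_free M^T by rewrite /row_free mxrank_tr hr.
  apply: trmx_inj; rewrite trmx0; apply/eqP.
  by rewrite -(mulmx_free_eq0 _ hf) -trmx_mul hv trmx0.
- move=> hi; apply/eqP; rewrite eqn_leq rank_leq_col /= leqNgt; apply/negP => hlt.
  have hlt' : (\rank M^T < s)%N by rewrite mxrank_tr.
  have [u unz hu] := ker_nonzero hlt'.
  have : M *m u^T = 0 by rewrite -[M]trmxK -trmx_mul hu trmx0.
  move/hi => /(congr1 trmx); rewrite trmxK trmx0 => /eqP; by rewrite (negbTE unz).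
Qed.

Lemma cast_mul0 k a b (e : a = b) (X : 'M[F]_(k, a)) (u : 'rV_k) :
  u *m castmx (erefl k, e) X = 0 <-> u *m X = 0.
Proof. by case: b / e; rewrite castmx_id. Qed.

End Gen.

Lemma submxcol0P (F : fieldType) l (q : 'I_l -> nat) r (v : 'M[F]_(\sum_i q i, r)) :
  (forall i, submxcol v i = 0) -> v = 0.
Proof. by move=> h; apply/mxcolP => i; rewrite h submxcol0. Qed.

Section Blk.
Variable F : fieldType.
Variable l : nat.
Variables p q : 'I_l -> nat.
Variable B : forall i, 'M[F]_(p i, q i).

Lemma blk_diag i :
  (\matrix_(a < p i, b < q i)
        if (i == i) then
          (if insub (val b) is Some b' then B i a b' else 0)
        else 0) = B i.
Proof. by apply/matrixP => a c; rewrite mxE eqxx valK. Qed.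

Lemma blk_off i j : i != j ->
  (\matrix_(a < p i, b < q j)
        if (i == j) then
          (if insub (val b) is Some b' then B i a b' else 0)
        else 0) = 0.
Proof. by move=> /negbTE h; apply/matrixP => a c; rewrite !mxE h. Qed.

Lemma submxrow_blk r (u : 'M[F]_(r, \sum_i p i)) j :
  submxrow (u *m blkdiag B) j = submxrow u j *m B j.
Proof.
rewrite -{1}(submxrowK u) /blkdiag mul_mxrow_mxblock mxrowK (bigD1 j) //=.
rewrite big1 ?addr0; first by rewrite blk_diag.
by move=> i hij; rewrite blk_off ?mulmx0.
Qed.

Lemma submxcol_blk r (v : 'M[F]_(\sum_i q i, r)) i :
  submxcol (blkdiag B *m v) i = B i *m submxcol v i.
Proof.
rewrite -{1}(submxcolK v) /blkdiag mxblockEv mxcol_mul mxcolK mul_mxrow_mxcol.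
rewrite (bigD1 i) //= big1 ?addr0; first by rewrite blk_diag.
by move=> j hij; rewrite blk_off 1?eq_sym ?mul0mx.
Qed.

Definition embv i r (w : 'M[F]_(q i, r)) : 'M[F]_(\sum_j q j, r) :=
  \mxcol_j (\matrix_(a < q j, c < r)
     if i == j then (if insub (val a) is Some a' then w a' c else 0) else 0).

Lemma embv_diag i r (w : 'M[F]_(q i, r)) : submxcol (embv w) i = w.
Proof. by rewrite mxcolK; apply/matrixP => a c; rewrite mxE eqxx valK. Qed.

Lemma embv_off i j r (w : 'M[F]_(q i, r)) : i != j -> submxcol (embv w) j = 0.
Proof. by move=> /negbTE h; rewrite mxcolK; apply/matrixP => a c; rewrite !mxE h. Qed.


Lemma blk_rank (hr : forall i, \rank (B i) = q i) : \rank (blkdiag B) = (\sum_i q i)%N.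
Proof.
apply/colinjP => v hv; apply: submxcol0P => i.
by apply: (proj1 (colinjP (B i)) (hr i)); rewrite -submxcol_blk hv submxcol0.
Qed.

Lemma blk_rank_inv (hr : \rank (blkdiag B) = (\sum_i q i)%N) i : \rank (B i) = q i.
Proof.
apply/colinjP => w hw.
have hv : embv w = 0.
  apply: (proj1 (colinjP (blkdiag B)) hr).
  apply: submxcol0P => j; rewrite submxcol_blk.
  by case: (eqVneq i j) => [<-|hij]; rewrite ?embv_diag ?hw // embv_off ?mulmx0.
by rewrite -(embv_diag w) hv submxcol0.
Qed.

End Blk.


Section Gam.
Variables (F K : finFieldType) (sigma : {rmorphism K -> F}) (m : nat) (b : 'I_m -> F).
Hypothesis hb : is_basis sigma b.

Lemma coordvP x : x = \sum_(r < m) sigma (coordv sigma b x 0 r) * b r.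
Proof.
rewrite /coordv; case: pickP => [a /eqP //| hn].
have [a [ha _]] := hb x; by move: (hn a); rewrite -ha eqxx.
Qed.

Lemma uniq0 (a : 'rV[K]_m) : \sum_(r < m) sigma (a 0 r) * b r = 0 -> a = 0.
Proof.
move=> h; have [a0 [_ hu]] := hb 0.
have e1 := hu a (esym h).
have e2 : a0 = 0 by apply: hu; rewrite big1 // => r _; rewrite mxE rmorph0 mul0r.
by rewrite -e1 e2.
Qed.

Lemma Gamma_entry p q (c : 'rV[F]_p) (X : 'M[K]_(p, q)) j :
  (c *m map_mx sigma X) 0 j = \sum_(r < m) sigma ((Gamma sigma b c *m X) r j) * b r.
Proof.
rewrite mxE.
transitivity (\sum_(t < p) \sum_(r < m) sigma (Gamma sigma b c r t) * b r * sigma (X t j)).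
  apply: eq_bigr => t _; rewrite mxE {1}(coordvP (c 0 t)) mulr_suml.
  by apply: eq_bigr => r _; rewrite mxE.
rewrite exchange_big; apply: eq_bigr => r _; rewrite mxE rmorph_sum mulr_suml.
by apply: eq_bigr => t _; rewrite rmorphM mulrAC.
Qed.

Lemma Gamma_ker p q (c : 'rV[F]_p) (X : 'M[K]_(p, q)) :
  c *m map_mx sigma X = 0 <-> Gamma sigma b c *m X = 0.
Proof.
split=> h.
- apply/matrixP => r j.
  have := uniq0 (a := \row_r' (Gamma sigma b c *m X) r' j).
  move=> /(_ _)/matrixP/(_ 0 r); rewrite !mxE; apply.
  rewrite -[RHS](_ : (c *m map_mx sigma X) 0 j = 0); last by rewrite h mxE.
  by rewrite Gamma_entry; apply: eq_bigr => r' _; rewrite mxE.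
- apply/matrixP => i j; rewrite ord1 Gamma_entry h mxE big1 // => r _.
  by rewrite mxE rmorph0 mul0r.
Qed.

Lemma Gamma_rank p q (c : 'rV[F]_p) (X : 'M[K]_(p, q)) :
  Gamma sigma b c *m X = 0 -> (\rank X + \rank (Gamma sigma b c) <= p)%N.
Proof.
move=> h.
have hs : (X^T <= kermx (Gamma sigma b c)^T)%MS.
  by rewrite sub_kermx -trmx_mul h trmx0.
have := mxrankS hs; rewrite mxrank_ker !mxrank_tr.
have := rank_leq_col (Gamma sigma b c); lia.
Qed.

End Gam.

Lemma lift_widen l (j : 'I_l) : lift ord_max j = widen_ord (leqnSn l) j.
Proof. by apply: val_inj => /=; rewrite /bump leqNgt ltn_ord. Qed.

Lemma split_sum l (f : 'I_l -> nat) t : (t <= \sum_i f i)%N ->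
  exists g : 'I_l -> nat, (forall i, g i <= f i)%N /\ (\sum_i g i)%N = t.
Proof.
elim: l f t => [|l IH] f t.
  rewrite big_ord0 leqn0 => /eqP ->; by exists (fun _ => 0%N); split=> [i|]; rewrite ?big_ord0.
rewrite big_ord_recr /= => ht.
set S := (\sum_(i < l) f (widen_ord (leqnSn l) i))%N in ht *.
have [g' [hg' sg']] := IH (fun i => f (widen_ord (leqnSn l) i)) (minn t S) (geq_minr _ _).
exists (fun i => if unlift ord_max i is Some j then g' j else (t - minn t S)%N).
split.
- move=> i; case: (unliftP ord_max i) => [j ->|->]; last by move=> /=; rewrite ?unlift_none; lia.
  by rewrite lift_widen hg'.
- rewrite big_ord_recr /= unlift_none.
  under eq_bigr do rewrite -lift_widen liftK.
  rewrite sg'; lia.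
Qed.

Lemma bigmin_lb (I : finType) (P : pred I) (f : I -> nat) d x :
  (x <= d)%N -> (forall i, P i -> x <= f i)%N -> (x <= \big[minn/d]_(i | P i) f i)%N.
Proof.
move=> hd hf; apply: (big_ind (fun y => x <= y)%N) => //.
by move=> y z hy hz; rewrite leq_min hy hz.
Qed.

Lemma bigmin_ub (I : finType) (P : pred I) (f : I -> nat) d j :
  P j -> (\big[minn/d]_(i | P i) f i <= f j)%N.
Proof.
move=> hj; have : j \in index_enum I by rewrite mem_index_enum.
elim: (index_enum I) => [//|x r IH]; rewrite inE big_cons.
case/orP => [/eqP <-|hr].
  by rewrite hj geq_minl.
case: (P x); last exact: IH.
by rewrite (leq_trans (geq_minr _ _)) // IH.
Qed.

Unset Implicit Arguments. Set Strict Implicit.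


Lemma KU (F : finFieldType) l (n : 'I_l -> nat) (K : 'I_l -> finFieldType)
  (sigma : forall i, {rmorphism K i -> F}) (m : 'I_l -> nat) (b : forall i, 'I_(m i) -> F)
  (hb : forall i, is_basis (sigma i) (b i)) (kk : 'I_l -> nat)
  (A : forall i, 'M[K i]_(n i, kk i)) (c : 'rV[F]_(\sum_(i < l) n i)) :
  (forall i, \rank (A i) = kk i) ->
  c *m blkdiag (fun i => map_mx (sigma i) (A i)) = 0 ->
  (srank sigma b c + \sum_(i < l) kk i <= \sum_(i < l) n i)%N.
Proof.
move=> hr hc; rewrite /srank -big_split /=; apply: leq_sum => i _.
have h : submxrow c i *m map_mx (sigma i) (A i) = 0.
  by rewrite -(submxrow_blk (fun i => map_mx (sigma i) (A i))) hc submxrow0.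
move/(Gamma_ker (hb i)): h => /Gamma_rank; rewrite hr; lia.
Qed.

Arguments KU {F l n K sigma m b} hb {kk A c}.

Theorem mainTheorem1
  (F : finFieldType) (l : nat) (n : 'I_l -> nat)
  (K : 'I_l -> finFieldType) (sigma : forall i, {rmorphism K i -> F})
  (m : 'I_l -> nat) (b : forall i, 'I_(m i) -> F)
  (k : nat) (G : 'M[F]_(k, \sum_(i < l) n i)) :
  (0 < l)%N ->
  (forall i, 0 < n i)%N ->
  (forall i, is_basis (sigma i) (b i)) ->
  (1 <= k)%N ->
  \rank G = k ->
  MSRD sigma b G <->
  (forall (kk : 'I_l -> nat) (A : forall i, 'M[K i]_(n i, kk i))
          (Hk : (\sum_(i < l) kk i)%N = k),
     (forall i, kk i <= n i)%N ->
     \rank (blkdiag (fun i => map_mx (sigma i) (A i))) = k ->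
     castmx (erefl k, Hk) (G *m blkdiag (fun i => map_mx (sigma i) (A i)))
       \in unitmx).
Proof.
move=> l0 n0 hb k1 rG.
have fG : row_free G by rewrite /row_free rG.
have kN : (k <= \sum_(i < l) n i)%N by rewrite -rG rank_leq_col.
rewrite /MSRD /min_srank_dist; split.
- move=> hMS kk A Hk hkk hr.
  have hrA : forall i, \rank (A i) = kk i.
    move=> i; rewrite -(mxrank_map (sigma i)).
    by apply: (blk_rank_inv (B := fun i => map_mx (sigma i) (A i))); rewrite hr Hk.
  rewrite -row_free_unit; apply/negPn/negP; rewrite /row_free => hnf.
  have hlt : (\rank (castmx (erefl k, Hk)
        (G *m blkdiag (fun i => map_mx (sigma i) (A i)))) < k)%N.
    by rewrite ltn_neqAle hnf rank_leq_col.
  have [u unz hu] := ker_nonzero hlt.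
  move/cast_mul0: hu; rewrite mulmxA => hu.
  have h1 := KU hb hrA hu.
  have h2 := @bigmin_ub _ (fun c => (c <= G)%MS && (c != 0)) (fun c => srank sigma b c)
     (\sum_(i < l) n i).+1 (u *m G).
  rewrite hMS submxMl mulmx_free_eq0 // unz in h2.
  have h3 := h2 isT; rewrite Hk in h1; move: h1 h3 kN; set N := (\sum_(i < l) n i)%N; set s := srank _ _ (u *m G); lia.
- move=> H; apply/eqP; rewrite eqn_leq; apply/andP; split.
  + have hk1 : (k.-1 <= \sum_(i < l) n i)%N by lia.
    have [g [hg sg]] := split_sum hk1.
    pose A := fun i => (pid_mx (g i) : 'M[K i]_(n i, g i)).
    have hrA : forall i, \rank (A i) = g i by move=> i; rewrite rank_pid_mx.
    have hlt : (\rank (G *m blkdiag (fun i => map_mx (sigma i) (A i))) < k)%N.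
      by rewrite (leq_ltn_trans (rank_leq_col _)) // sg; lia.
    have [u unz hu] := ker_nonzero hlt.
    rewrite mulmxA in hu.
    have h1 := KU hb hrA hu; rewrite sg in h1.
    have h2 := @bigmin_ub _ (fun c => (c <= G)%MS && (c != 0)) (fun c => srank sigma b c)
     (\sum_(i < l) n i).+1 (u *m G).
    rewrite submxMl mulmx_free_eq0 // unz in h2.
    apply: leq_trans (h2 isT) _; move: h1 kN; set N := (\sum_(i < l) n i)%N; set s := srank _ _ (u *m G); lia.
  + apply: bigmin_lb; first lia.
    move=> c /andP [cG cnz]; rewrite leqNgt; apply/negP => hlt.
    pose Kr := fun i => kermx (Gamma (sigma i) (b i) (submxrow c i))^T.
    have hf : forall i, (\rank (Kr i) + \rank (Gamma (sigma i) (b i) (submxrow c i)) = n i)%N.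
      by move=> i; rewrite mxrank_ker mxrank_tr subnK // rank_leq_col.
    have hsum : (k <= \sum_(i < l) \rank (Kr i))%N.
      have : (\sum_(i < l) \rank (Kr i) + srank sigma b c = \sum_(i < l) n i)%N.
        by rewrite /srank -big_split; apply: eq_bigr => i _; exact: hf.
      lia.
    have [kk [hkk sk]] := split_sum hsum.
    pose A := fun i => (pid_mx (kk i) *m row_base (Kr i))^T : 'M[K i]_(n i, kk i).
    have hrA : forall i, \rank (A i) = kk i.
      by move=> i; rewrite mxrank_tr mxrankMfree ?row_base_free // rank_pid_mx.
    have hkn : forall i, (kk i <= n i)%N.
      by move=> i; have := hkk i; have := hf i; lia.
    have hGA : forall i, Gamma (sigma i) (b i) (submxrow c i) *m A i = 0.
      move=> i; apply: trmx_inj; rewrite trmx0 trmx_mul trmxK; apply/eqP.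
      rewrite -sub_kermx; apply: submx_trans (submxMl _ _) _.
      by rewrite eq_row_base submx_refl.
    have hrM : \rank (blkdiag (fun i => map_mx (sigma i) (A i))) = k.
      by rewrite -sk; apply: blk_rank => i; rewrite mxrank_map hrA.
    have hU := H kk A sk hkn hrM.
    case/submxP: cG => D cD.
    have hc0 : c *m blkdiag (fun i => map_mx (sigma i) (A i)) = 0.
      apply/mxrowP => i; rewrite submxrow_blk submxrow0.
      by apply/(Gamma_ker (hb i)); exact: hGA i.
    have : D *m castmx (erefl k, sk) (G *m blkdiag (fun i => map_mx (sigma i) (A i))) = 0.
      by apply/cast_mul0; rewrite mulmxA -cD.
    move/(congr1 (mulmx^~ (invmx (castmx (erefl k, sk)
         (G *m blkdiag (fun i => map_mx (sigma i) (A i))))))).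
    rewrite mulmxK // mul0mx => D0.
    by move: cnz; rewrite cD D0 mul0mx eqxx.
Qed.
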